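(* Assume $f$ has a unique global maximizer, contains no weak epistasis, and every order-1 epistasis of $f$ is strict. Then any two distinct maximal cliques of the epistatic graph are vertex-disjoint.
   Context: Fix $\ell\ge1$, loci $V=\{0,\dots,\ell-1\}$, chromosomes $\vec y\in\{0,1\}^V$, fitness $f:\{0,1\}^V\to\mathbb R$ (maximized) with unique global maximizer $g$. An assignment $A$ is a set of pairs $(v,a)$ with at most one pair per locus; coverage $\mathcal C(A)$; $A[v]$ its allele at $v$. $\Psi_A$ is the set of chromosomes agreeing with $A$ on $\mathcal C(A)$ with maximum fitness among such chromosomes; $\Psi_A[v]=\{\psi_v:\psi\in\Psi_A\}$. Epistasis: for $v\in V$ and nonempty $S\subseteq V\setminus\{v\}$, $S\Rightarrow v$ iff for every $s\in S$ there exists an assignment $A$ with $\mathcal C(A)=S$ and $\Psi_A[v]\neq\Psi_{A\setminus\{(s,A[s])\}}[v]$. An epistasis $S\Rightarrow v$ with $|S|\ge2$ is weak if no nonempty proper subset $T\subsetneq S$ has $T\Rightarrow v$. An order-1 epistasis $\{u\}\Rightarrow v$ is strict, written $u\rightarrow v$, if $\Psi_{\{(u,1-g[u])\}}[v]=\{1-g[v]\}$. The epistatic graph is the directed graph on $V$ with edge $u\to v$ iff $\{u\}\Rightarrow v$. A clique is a set of vertices $C$ with $a\rightarrow b$ for all distinct $a,b\in C$; it is maximal if it is not properly contained in another clique. *)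

(* Defs.v *)
From mathcomp Require Import all_boot all_order all_algebra.
Set Implicit Arguments. Unset Strict Implicit. Unset Printing Implicit Defensive.
Import Order.TTheory GRing.Theory Num.Theory.
Local Open Scope ring_scope.

Section Epistasis.
Variables (R : realDomainType) (l : nat).

Definition chrom := {ffun 'I_l -> bool}.

(* An assignment: at most one allele per locus, i.e. a partial map V -> {0,1}. *)
Definition assignment := {ffun 'I_l -> option bool}.

Definition coverage (A : assignment) : {set 'I_l} := [set v | A v != None].

Definition remove_locus (A : assignment) (s : 'I_l) : assignment :=
  [ffun w => if w == s then None else A w].

Definition single (u : 'I_l) (a : bool) : assignment :=
  [ffun w => if w == u then Some a else None].

Definition agrees (A : assignment) (y : chrom) : bool :=
  [forall v, if A v is Some a then y v == a else true].

Variable f : chrom -> R.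

Definition Psi (A : assignment) : {set chrom} :=
  [set y | agrees A y && [forall z, agrees A z ==> (f z <= f y)]].

Definition Psi_at (A : assignment) (v : 'I_l) : {set bool} :=
  [set (y : chrom) v | y in Psi A].

Definition epistasis (S : {set 'I_l}) (v : 'I_l) : Prop :=
  v \notin S /\ S != set0 /\
  forall s, s \in S ->
    exists A : assignment, coverage A = S /\
      Psi_at A v != Psi_at (remove_locus A s) v.

Definition weak_epistasis (S : {set 'I_l}) (v : 'I_l) : Prop :=
  epistasis S v /\ (2 <= #|S|)%N /\
  ~ (exists T : {set 'I_l}, T != set0 /\ T \proper S /\ epistasis T v).

Variable g : chrom.

Definition strict_arrow (u v : 'I_l) : Prop :=
  epistasis [set u] v /\ Psi_at (single u (~~ g u)) v = [set ~~ g v].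

Definition is_clique (C : {set 'I_l}) : Prop :=
  forall a b, a \in C -> b \in C -> a != b -> strict_arrow a b.

Definition is_maximal_clique (C : {set 'I_l}) : Prop :=
  is_clique C /\ ~ (exists D : {set 'I_l}, C \proper D /\ is_clique D).

Definition unique_global_maximizer : Prop :=
  forall y : chrom, y != g -> f y < f g.

End Epistasis.

(* Main.v *)
Require Import Defs.
From mathcomp Require Import all_boot all_order all_algebra.
Import Order.TTheory GRing.Theory Num.Theory.
Local Open Scope ring_scope.
Set Implicit Arguments. Unset Strict Implicit.

Section S.
Variables (R : realDomainType) (l : nat) (f : chrom l -> R) (g : chrom l).

Lemma agrees_single (u : 'I_l) x (y : chrom l) : agrees (single u x) y = (y u == x).
Proof.
apply/forallP/eqP.
  by move=> H; move: (H u); rewrite ffunE eqxx => /eqP.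
by move=> Hy v; rewrite ffunE; case: eqP => // ->; apply/eqP.
Qed.

Lemma inPsi_single u x y : (y \in Psi f (single u x)) =
  (y u == x) && [forall z : chrom l, (z u == x) ==> (f z <= f y)].
Proof.
rewrite inE agrees_single; congr (_ && _); apply/forallP/forallP => H z;
by move: (H z); rewrite agrees_single.
Qed.

Lemma strict_val a w : strict_arrow f g a w ->
  forall y, y \in Psi f (single a (~~ g a)) -> y w = ~~ g w.
Proof.
move=> [_ H] y Hy.
have: y w \in Psi_at f (single a (~~ g a)) w by apply: imset_f.
by rewrite H in_set1 => /eqP.
Qed.

Lemma strict_ex a w : strict_arrow f g a w ->
  exists y, y \in Psi f (single a (~~ g a)).
Proof.
move=> [_ H].
have: ~~ g w \in Psi_at f (single a (~~ g a)) w by rewrite H set11.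
by case/imsetP => y Hy _; exists y.
Qed.

Lemma Psi_sub a w : strict_arrow f g a w -> strict_arrow f g w a ->
  Psi f (single a (~~ g a)) \subset Psi f (single w (~~ g w)).
Proof.
move=> Haw Hwa; apply/subsetP => y Hy.
have [z' Hz'] := strict_ex Hwa.
have Hyw := strict_val Haw Hy.
have Hz'a := strict_val Hwa Hz'.
move: (Hy) (Hz'); rewrite !inPsi_single => /andP [_ /forallP Hy'] /andP [_ /forallP Hz''].
rewrite Hyw eqxx /=; apply/forallP => z; apply/implyP => Hz.
apply: le_trans (implyP (Hz'' z) Hz) _.
by apply: (implyP (Hy' z')); rewrite Hz'a.
Qed.

Lemma Psi_empty : unique_global_maximizer f g ->
  Psi f [ffun => None] = [set g].
Proof.
move=> Hu; apply/setP => y; rewrite !inE.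
have Ag : forall y : chrom l, agrees [ffun => None] y by move=> z; apply/forallP => v; rewrite ffunE.
rewrite Ag /=.
case: (eqVneq y g) => [->|Hyg].
  apply/forallP => z; apply/implyP => _.
  by case: (eqVneq z g) => [->//|Hz]; apply: ltW; apply: Hu.
apply/negP => /forallP /(_ g) /implyP /(_ (Ag g)).
by rewrite leNgt Hu.
Qed.

Lemma strict_trans a w b : a != b -> unique_global_maximizer f g ->
  strict_arrow f g a w -> strict_arrow f g w a -> strict_arrow f g w b ->
  strict_arrow f g a b.
Proof.
move=> Hab Hu Haw Hwa Hwb.
have E : Psi f (single a (~~ g a)) = Psi f (single w (~~ g w)).
  by apply/eqP; rewrite eqEsubset !Psi_sub.
have Hb : Psi_at f (single a (~~ g a)) b = [set ~~ g b].
  by rewrite /Psi_at E; case: Hwb.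
split => //.
split; first by rewrite in_set1 eq_sym.
split; first by apply/set0Pn; exists a; rewrite set11.
move=> s; rewrite in_set1 => /eqP ->.
exists (single a (~~ g a)); split.
  apply/setP => v; rewrite /coverage !inE ffunE; by case: (eqVneq v a).
have -> : remove_locus (single a (~~ g a)) a = [ffun => None].
  by apply/ffunP => v; rewrite !ffunE; case: eqP.
rewrite Hb /Psi_at Psi_empty // imset_set1.
apply/negP => /eqP /setP /(_ (~~ g b)); rewrite !inE eqxx.
by case: (g b).
Qed.

Lemma clique_union C1 C2 w : unique_global_maximizer f g ->
  is_clique f g C1 -> is_clique f g C2 -> w \in C1 -> w \in C2 ->
  is_clique f g (C1 :|: C2).
Proof.
move=> Hu H1 H2 w1 w2.
have key : forall D1 D2, is_clique f g D1 -> is_clique f g D2 -> w \in D1 -> w \in D2 ->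
   forall a b, a \in D1 -> b \in D2 -> a != b -> strict_arrow f g a b.
  move=> D1 D2 K1 K2 v1 v2 a b a1 b2 ab.
  case: (eqVneq a w) => [Eaw|Naw]; first by subst a; apply: K2.
  case: (eqVneq b w) => [Ebw|Nbw]; first by subst b; apply: K1.
  apply: (@strict_trans a w b) => //.
  - by apply: K1.
  - by apply: K1 => //; rewrite eq_sym.
  - by apply: K2 => //; rewrite eq_sym.
move=> a b; rewrite !inE => /orP [a1|a2] /orP [b1|b2] ab.
- exact: H1.
- exact: (key C1 C2).
- exact: (key C2 C1).
- exact: H2.
Qed.

End S.

Theorem corollary6 (R : realDomainType) (l : nat) (f : chrom l -> R) (g : chrom l) :
  (0 < l)%N ->
  unique_global_maximizer f g ->
  (forall (S : {set 'I_l}) (v : 'I_l), ~ weak_epistasis f S v) ->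
  (forall u v : 'I_l, epistasis f [set u] v -> strict_arrow f g u v) ->
  forall C1 C2 : {set 'I_l},
    is_maximal_clique f g C1 -> is_maximal_clique f g C2 -> C1 != C2 ->
    [disjoint C1 & C2].
Proof.
move=> _ Hu _ _ C1 C2 [K1 M1] [K2 M2] N.
rewrite -setI_eq0; apply: (contraNT _ N) => /set0Pn [w]; rewrite inE => /andP [w1 w2].
have HU := clique_union Hu K1 K2 w1 w2.
have S21 : C2 \subset C1.
  apply/negPn/negP => Hn; apply: M1; exists (C1 :|: C2); split => //.
  by apply: properUl.
have S12 : C1 \subset C2.
  apply/negPn/negP => Hn; apply: M2; exists (C1 :|: C2); split => //.
  by apply: properUr.
by rewrite eqEsubset S12 S21.
Qed.
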